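(* Assume the Setting below. Let $(x_p)\subset\Omega$ be such that $\mu_p^{-2}:=p|u_p(x_p)|^{p-1}\to+\infty$, and assume that the rescaled functions $$v_p(x):=\frac{p}{u_p(x_p)}\left(u_p(x_p+\mu_px)-u_p(x_p)\right)$$ converge to $U(x)=\log\left(\frac{1}{1+\frac18|x|^2}\right)^2$ in $C^1_{loc}\left(\mathbb{R}^2\setminus\{-\lim_p \frac{x_p}{\mu_p}\}\right)$ as $p\to+\infty$. Then $\frac{|x_p|}{\mu_p}\to0$ as $p\to+\infty$. Consequently $v_p\to U$ in $C^1_{loc}(\mathbb{R}^2\setminus\{0\})$.
   Context: Setting: $\Omega\subset\mathbb{R}^2$ is a simply connected bounded smooth domain invariant under a cyclic group $G$ of rotations about the origin $O$, with $|G|\ge 4e$. $(u_p)_{p>1}$ is a family of sign-changing solutions of $-\Delta u=|u|^{p-1}u$ in $\Omega$, $u=0$ on $\partial\Omega$, which are $G$-symmetric ($u_p\circ g=u_p$ for $g\in G$), have exactly two nodal regions, whose nodal line $NL_p:=\{x\in\Omega:u_p(x)=0\}$ satisfies $NL_p\cap\partial\Omega=\emptyset$, $O\notin NL_p$, and with $p\int_\Omega|\nabla u_p|^2\le\alpha\,8\pi e$ for some $\alpha<5$ and $p$ large; $\|u_p\|_\infty=\|u_p^+\|_\infty$. Limits are along a sequence $p\to+\infty$ along which $x_p/\mu_p$ converges. *)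

(* Defs.v *)
From mathcomp Require Import all_boot all_order all_algebra.
From mathcomp Require Import all_classical all_reals all_analysis.
Import Order.TTheory GRing.Theory Num.Theory numFieldNormedType.Exports.

Set Implicit Arguments.
Unset Strict Implicit.
Unset Printing Implicit Defensive.

Local Open Scope classical_set_scope.
Local Open Scope ring_scope.

Definition e1 {R : realType} : R * R := (1, 0).
Definition e2 {R : realType} : R * R := (0, 1).
Definition d1 {R : realType} (f : R * R -> R) : R * R -> R := 'D_e1 f.
Definition d2 {R : realType} (f : R * R -> R) : R * R -> R := 'D_e2 f.

Definition enorm {R : realType} (x : R * R) : R := Num.sqrt (x.1 ^+ 2 + x.2 ^+ 2).

Definition lap {R : realType} (f : R * R -> R) (x : R * R) : R :=
  d1 (d1 f) x + d2 (d2 f) x.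

Definition rot {R : realType} (t : R) (x : R * R) : R * R :=
  (cos t * x.1 - sin t * x.2, sin t * x.1 + cos t * x.2).

(* the cyclic group of rotations of order n about the origin
   (the unique subgroup of SO(2) of order n) *)
Definition rot_group {R : realType} (n : nat) : set (R * R -> R * R) :=
  [set rot (2 * pi * k%:R / n%:R) | k in [set: nat]].

Fixpoint iterD {R : realType} (vs : seq (R * R)) (f : R * R -> R) : R * R -> R :=
  match vs with
  | [::] => f
  | v :: vs' => 'D_v (iterD vs' f)
  end.
Definition smooth {R : realType} (f : R * R -> R) : Prop :=
  forall (vs : seq (R * R)) (x : R * R), differentiable (iterD vs f) x.

Definition bounded_smooth_domain {R : realType} (O : set (R * R)) : Prop :=
  (exists M : R, forall x, O x -> enorm x <= M) /\
  exists phi : R * R -> R, smooth phi /\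
    O = [set x | phi x < 0] /\
    (forall x, phi x = 0 -> (d1 phi x, d2 phi x) <> (0, 0)).

Definition I01 {R : realType} : set R := [set t : R | 0 <= t <= 1].

Definition simply_connected {R : realType} (O : set (R * R)) : Prop :=
  O !=set0 /\ connected O /\
  forall g : R -> R * R,
    {within I01, continuous g} -> (forall t, I01 t -> O (g t)) ->
    g 0 = g 1 ->
    exists H : R * R -> R * R,
      {within I01 `*` I01, continuous H} /\
      (forall s t, I01 s -> I01 t -> O (H (s, t))) /\
      (forall t, I01 t -> H (0, t) = g t /\ H (1, t) = g 0) /\
      (forall s, I01 s -> H (s, 0) = g 0 /\ H (s, 1) = g 0).

Definition bdry {R : realType} (O : set (R * R)) : set (R * R) :=
  closure O `\` interior O.

Definition C2_on {R : realType} (O : set (R * R)) (u : R * R -> R) : Prop :=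
  (forall x, O x -> differentiable u x /\ differentiable (d1 u) x /\
                    differentiable (d2 u) x) /\
  {within O, continuous (d1 (d1 u))} /\ {within O, continuous (d1 (d2 u))} /\
  {within O, continuous (d2 (d1 u))} /\ {within O, continuous (d2 (d2 u))} /\
  {within closure O, continuous u}.

Definition is_solution {R : realType} (O : set (R * R)) (p : R)
    (u : R * R -> R) : Prop :=
  C2_on O u /\
  (forall x, O x -> - lap u x = `|u x| `^ (p - 1) * u x) /\
  (forall x, bdry O x -> u x = 0).

Definition nodal_line {R : realType} (O : set (R * R)) (u : R * R -> R) :
  set (R * R) := [set x | O x /\ u x = 0].

Definition nodal_set_compl {R : realType} (O : set (R * R)) (u : R * R -> R) :
  set (R * R) := [set x | O x /\ u x <> 0].

Definition two_nodal_regions {R : realType} (O : set (R * R))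
    (u : R * R -> R) : Prop :=
  let N := nodal_set_compl O u in
  exists a b, N a /\ N b /\
    connected_component N a <> connected_component N b /\
    forall c, N c -> connected_component N c = connected_component N a \/
                     connected_component N c = connected_component N b.

Definition sign_changing {R : realType} (O : set (R * R)) (u : R * R -> R) :=
  (exists x, O x /\ 0 < u x) /\ (exists y, O y /\ u y < 0).

Definition dirichlet {R : realType} (O : set (R * R)) (u : R * R -> R) : \bar R :=
  (\int[(@lebesgue_measure R \x @lebesgue_measure R)]_(x in O)
      ((d1 u x) ^+ 2 + (d2 u x) ^+ 2)%:E)%E.

Definition Setting {R : realType} (O : set (R * R)) (n : nat) (alpha : R)
    (u : R -> R * R -> R) : Prop :=
  simply_connected O /\ bounded_smooth_domain O /\
  4 * expR 1 <= (n%:R : R) /\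
  (forall g, @rot_group R n g -> g @` O = O) /\
  alpha < 5 /\
  (forall p, 1 < p ->
     is_solution O p (u p) /\
     sign_changing O (u p) /\
     (forall g, @rot_group R n g -> forall x, O x -> u p (g x) = u p x) /\
     two_nodal_regions O (u p) /\
     closure (nodal_line O (u p)) `&` bdry O = set0 /\
     ~ nodal_line O (u p) 0 /\
     sup [set `|u p x| | x in O] = sup [set Num.max (u p x) 0 | x in O]) /\
  (exists p0 : R, forall p, p0 < p ->
     (p%:E * dirichlet O (u p) <= (alpha * 8 * pi * expR 1)%:E)%E).

Definition mu {R : realType} (u : R -> R * R -> R) (pn : nat -> R)
    (x : nat -> R * R) (k : nat) : R :=
  (pn k * `|u (pn k) (x k)| `^ (pn k - 1)) `^ (- (1 / 2)).

Definition vresc {R : realType} (u : R -> R * R -> R) (pn : nat -> R)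
    (x : nat -> R * R) (k : nat) (y : R * R) : R :=
  pn k / u (pn k) (x k) *
    (u (pn k) (x k + mu u pn x k *: y) - u (pn k) (x k)).

Definition resc_dom {R : realType} (O : set (R * R)) (u : R -> R * R -> R)
    (pn : nat -> R) (x : nat -> R * R) (k : nat) : set (R * R) :=
  [set y | O (x k + mu u pn x k *: y)].

Definition Ulim {R : realType} (y : R * R) : R :=
  ln (((1 + enorm y ^+ 2 / 8)^-1) ^+ 2).

Definition C1loc_cvg {R : realType} (f : nat -> R * R -> R) (g : R * R -> R)
    (D : set (R * R)) (Dn : nat -> set (R * R)) : Prop :=
  forall K : set (R * R), compact K -> K `<=` D ->
    (\forall k \near \oo, K `<=` Dn k) /\
    forall eps : R, 0 < eps -> \forall k \near \oo, forall y, K y ->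
      `|f k y - g y| < eps /\ `|d1 (f k) y - d1 g y| < eps /\
      `|d2 (f k) y - d2 g y| < eps.

(* Main.v *)
Require Import Defs.
From mathcomp Require Import all_boot all_order all_algebra.
From mathcomp Require Import all_classical all_reals all_analysis.
From mathcomp Require Import ring lra.
Import Order.TTheory GRing.Theory Num.Theory numFieldNormedType.Exports.
Local Open Scope classical_set_scope.
Local Open Scope ring_scope.

Lemma normle_enorm (R : realType) (y : R * R) : `|y| <= enorm y.
Proof.
rewrite prod_normE /enorm ge_max; apply/andP; split.
- rewrite -sqrtr_sqr; apply: ler_wsqrtr; rewrite lerDl; exact: sqr_ge0.
- rewrite -sqrtr_sqr; apply: ler_wsqrtr; rewrite lerDr; exact: sqr_ge0.
Qed.

Lemma enorm_le (R : realType) (y : R * R) : enorm y <= `|y.1| + `|y.2|.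
Proof.
have h1 := normr_ge0 y.1; have h2 := normr_ge0 y.2.
rewrite /enorm -(ger0_norm (addr_ge0 h1 h2)) -sqrtr_sqr; apply: ler_wsqrtr.
rewrite -[y.1 ^+ 2]real_normK ?num_real // -[y.2 ^+ 2]real_normK ?num_real //.
nra.
Qed.

Lemma enormZ (R : realType) (c : R) (y : R * R) :
  enorm (c *: y) = `|c| * enorm y.
Proof.
rewrite /enorm /= !exprMn -mulrDr sqrtrM ?sqr_ge0 // sqrtr_sqr //.
Qed.

Theorem proposition3p8 (R : realType) (O : set (R * R)) (n : nat) (alpha : R)
    (u : R -> R * R -> R) (pn : nat -> R) (x : nat -> R * R) (xi : R * R) :
  Setting O n alpha u ->
  (forall k, 1 < pn k) -> pn @ \oo --> +oo ->
  (forall k, O (x k)) ->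
  (fun k => pn k * `|u (pn k) (x k)| `^ (pn k - 1)) @ \oo --> +oo ->
  (fun k => (mu u pn x k)^-1 *: x k) @ \oo --> xi ->
  C1loc_cvg (vresc u pn x) Ulim (~` [set - xi]) (resc_dom O u pn x) ->
  (fun k => enorm (x k) / mu u pn x k) @ \oo --> 0 /\
  C1loc_cvg (vresc u pn x) Ulim (~` [set 0]) (resc_dom O u pn x).
Proof.
move=> [_ [_ [hn [_ [_ [hsol _]]]]]] hp1 hpinf hxO hbase hz hC1.
have mu_ge0 k : 0 <= mu u pn x k by exact: powR_ge0.
set th : R := 2 * pi * 1%:R / n%:R.
have n2 : 2 < (n%:R : R).
  have := @pexpR_gt1 R 1 ltr01; lra.
have th0 : 0 < th by rewrite /th mulr1 divr_gt0 // ?mulr_gt0 ?pi_gt0 //; lra.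
have thpi : th < pi.
  rewrite /th mulr1 ltr_pdivrMr; last lra.
  have := pi_gt0 R; nra.
set c := cos th; set s := sin th.
have s0 : 0 < s by apply: sin_gt0_pi; rewrite th0 thpi.
have cs : c ^+ 2 + s ^+ 2 = 1 by exact: cos2Dsin2.
have hc : `|c| <= 1 by exact: cos_max.
have hs : `|s| <= 1 by exact: sin_max.
set g : R * R -> R * R := fun y => (c * y.1 - s * y.2, s * y.1 + c * y.2).
have gG : rot_group n g by exists 1%N.
have symk k : u (pn k) (g (x k)) = u (pn k) (x k).
  have [_ [_ [hsym _]]] := hsol _ (hp1 k); exact: hsym.
have xi0 : xi = 0.
  case: (eqVneq xi 0) => // xine; exfalso.
  set ys : R * R := g xi - xi.
  have ys0 : 0 < `|ys|.
    rewrite normr_gt0; apply/eqP => h.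
    have e1 : c * xi.1 - s * xi.2 - xi.1 = 0 by have := congr1 fst h.
    have e2 : s * xi.1 + c * xi.2 - xi.2 = 0 by have := congr1 snd h.
    have pos : 0 < s ^+ 2 + (c - 1) ^+ 2.
      have := exprn_gt0 2 s0; have := sqr_ge0 (c - 1); lra.
    have h1 : (s ^+ 2 + (c - 1) ^+ 2) * xi.1 = 0.
      have -> : (s ^+ 2 + (c - 1) ^+ 2) * xi.1 =
        s * (s * xi.1 + c * xi.2 - xi.2) + (c - 1) * (c * xi.1 - s * xi.2 - xi.1) by ring.
      by rewrite e1 e2 !mulr0 addr0.
    have h2 : (s ^+ 2 + (c - 1) ^+ 2) * xi.2 = 0.
      have -> : (s ^+ 2 + (c - 1) ^+ 2) * xi.2 =
        (c - 1) * (s * xi.1 + c * xi.2 - xi.2) - s * (c * xi.1 - s * xi.2 - xi.1) by ring.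
      by rewrite e1 e2 !mulr0 subr0.
    move/eqP: h1; move/eqP: h2; rewrite !mulf_eq0 (gt_eqF pos) /= => /eqP h2 /eqP h1.
    by move/eqP: xine; apply; rewrite [xi]surjective_pairing h1 h2.
  have gx0 : 0 < `|g xi|.
    rewrite normr_gt0; apply/eqP => h.
    have e1 : c * xi.1 - s * xi.2 = 0 by have := congr1 fst h.
    have e2 : s * xi.1 + c * xi.2 = 0 by have := congr1 snd h.
    have h1 : xi.1 = 0.
      have -> : xi.1 = (c ^+ 2 + s ^+ 2) * xi.1 by rewrite cs mul1r.
      have -> : (c ^+ 2 + s ^+ 2) * xi.1 = c * (c * xi.1 - s * xi.2) + s * (s * xi.1 + c * xi.2) by ring.
      by rewrite e1 e2 !mulr0 addr0.
    have h2 : xi.2 = 0.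
      have -> : xi.2 = (c ^+ 2 + s ^+ 2) * xi.2 by rewrite cs mul1r.
      have -> : (c ^+ 2 + s ^+ 2) * xi.2 = c * (s * xi.1 + c * xi.2) - s * (c * xi.1 - s * xi.2) by ring.
      by rewrite e1 e2 !mulr0 subr0.
    by move/eqP: xine; apply; rewrite [xi]surjective_pairing h1 h2.
  set r : R := Num.min `|ys| `|g xi| / 2.
  have r0 : 0 < r by rewrite /r divr_gt0 // lt_min ys0 gx0.
  have rys : r <= `|ys| / 2 by rewrite /r ler_pM2r // ge_min lexx.
  have rgx : r <= `|g xi| / 2 by rewrite /r ler_pM2r // ge_min lexx orbT.
  set K := `[ys.1 - r, ys.1 + r] `*` `[ys.2 - r, ys.2 + r].
  have Kc : compact K by apply: compact_setX; exact: segment_compact.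
  have Kdist y : K y -> `|y - ys| <= r.
    move=> [/=]; rewrite !in_itv /= => /andP[a1 a2] /andP[b1 b2].
    rewrite prod_normE ge_max /= !ler_norml; apply/andP; split; apply/andP; split; lra.
  have KD : K `<=` ~` [set - xi].
    move=> y Ky /= hy; have := Kdist y Ky.
    rewrite hy /ys opprB addrA addNr add0r normrN; lra.
  have Klow y : K y -> `|ys| / 2 <= enorm y.
    move=> Ky; apply: le_trans (@normle_enorm _ y).
    have h1 := Kdist y Ky; have := ler_normD y (ys - y).
    rewrite [y + _]addrC subrK [`|ys - y|]distrC; lra.
  set m : R := `|ys| / 2.
  have m0 : 0 < m by rewrite /m divr_gt0.
  set q : R := (1 + m ^+ 2 / 8)^-1.
  have q0 : 0 < q by rewrite /q invr_gt0; have := sqr_ge0 m; lra.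
  have q1 : q < 1.
    rewrite /q invf_lt1; last by have := sqr_ge0 m; lra.
    have := exprn_gt0 2 m0; lra.
  have Kup y : K y -> Ulim y <= ln (q ^+ 2).
    move=> Ky; have hE := Klow y Ky; rewrite -/m in hE.
    have hE2 : m ^+ 2 <= enorm y ^+ 2 by rewrite ler_sqr ?nnegrE //; lra.
    set w := (1 + enorm y ^+ 2 / 8)^-1.
    have w0 : 0 < w by rewrite /w invr_gt0; have := sqr_ge0 (enorm y); lra.
    have wq : w <= q.
      rewrite /w /q lef_pV2 ?posrE; [lra| |]; have := sqr_ge0 m; have := sqr_ge0 (enorm y); lra.
    rewrite /Ulim -/w ler_ln ?posrE ?exprn_gt0 //.
    rewrite ler_sqr ?nnegrE; lra.
  set eps : R := - ln (q ^+ 2).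
  have eps0 : 0 < eps.
    rewrite /eps oppr_gt0; apply: ln_lt0; rewrite exprn_gt0 //=.
    rewrite expr_lt1 //; lra.
  have hK := (hC1 K Kc KD).2 eps eps0.
  have hmu := cvgry_gt hbase 0.
  have hzk : \forall k \near \oo, `|xi - (mu u pn x k)^-1 *: x k| < r / 3.
    by move/cvgrPdist_lt: hz; apply; rewrite divr_gt0.
  case: hK => N1 _ H1; case: hmu => N2 _ H2; case: hzk => N3 _ H3.
  pose k := (N1 + N2 + N3)%N.
  have hk1 : (N1 <= k)%N by rewrite /k -addnA leq_addr.
  have hk2 : (N2 <= k)%N by rewrite /k addnAC leq_addl.
  have hk3 : (N3 <= k)%N by rewrite /k leq_addl.
  have mu0 : 0 < mu u pn x k by apply: powR_gt0; exact: H2.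
  have hz3 := H3 k hk3.
  set z := (mu u pn x k)^-1 *: x k in hz3.
  have za : `|xi.1 - z.1| < r / 3 /\ `|xi.2 - z.2| < r / 3.
    by move: hz3; rewrite prod_normE gt_max => /andP[a b].
  set yk : R * R := (mu u pn x k)^-1 *: (g (x k) - x k).
  have vk : vresc u pn x k yk = 0.
    rewrite /vresc /yk scalerA mulfV ?gt_eqF // scale1r [x k + _]addrC subrK.
    by rewrite symk subrr mulr0.
  have sE (a b : R) : a *: b = a * b by [].
  have yk1 : yk.1 - ys.1 = (c - 1) * (z.1 - xi.1) - s * (z.2 - xi.2).
    rewrite /yk /ys /z /= !sE; ring.
  have yk2 : yk.2 - ys.2 = s * (z.1 - xi.1) + (c - 1) * (z.2 - xi.2).
    rewrite /yk /ys /z /= !sE; ring.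
  have hc1 : `|c - 1| <= 2 by have := ler_normB c 1; rewrite normr1; lra.
  have Kyk : K yk.
    case: za => za1 za2.
    rewrite [`|xi.1 - _|]distrC in za1; rewrite [`|xi.2 - _|]distrC in za2.
    have n1 := normr_ge0 (z.1 - xi.1); have n2' := normr_ge0 (z.2 - xi.2).
    have nc := normr_ge0 (c - 1); have ns := normr_ge0 s.
    have b1 : `|yk.1 - ys.1| <= r.
      rewrite yk1; apply: le_trans (ler_normB _ _) _; rewrite !normrM; nra.
    have b2 : `|yk.2 - ys.2| <= r.
      rewrite yk2; apply: le_trans (ler_normD _ _) _; rewrite !normrM; nra.
    have key (a lo : R) : `|a - lo| <= r -> a \in `[lo - r, lo + r].
      by rewrite ler_norml in_itv /= => /andP[? ?]; apply/andP; split; lra.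
    by split; apply: key.
  have [hv _] := H1 k hk1 yk Kyk.
  rewrite vk sub0r normrN in hv.
  have := Kup yk Kyk; have := ler_norm (- Ulim yk); rewrite normrN /eps in hv *.
  lra.
split; last by move: hC1; rewrite xi0 oppr0.
have -> : (fun k => enorm (x k) / mu u pn x k) =
          (fun k => enorm ((mu u pn x k)^-1 *: x k)).
  apply: funext => k; rewrite enormZ ger0_norm ?invr_ge0 // mulrC //.
rewrite xi0 in hz.
apply/cvgrPdist_lt => e e0.
move/cvgrPdist_lt: hz => hz.
have e2 : 0 < e / 2 by rewrite divr_gt0.
have := hz (e / 2) e2.
apply: filterS => k; rewrite sub0r normrN => hk.
set z := (mu u pn x k)^-1 *: x k in hk *.
have ge0 : 0 <= enorm z by exact: sqrtr_ge0.
rewrite sub0r normrN ger0_norm //.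
apply: le_lt_trans (@enorm_le _ z) _.
move: hk; rewrite prod_normE gt_max => /andP[a b]; lra.
Qed.
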